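(* Let $u\in\mathbb R$, $\vartheta_1\in[0,\pi/2]$, $\varphi_1\in\mathbb R$, and put $x=\cos\vartheta_1\cosh(u+i\varphi_1)$. If $\lambda\in\mathbb C$ satisfies $\cosh\sqrt{\lambda+u^2}-x=0$, then $\operatorname{Re}\lambda\le0$.
   Context: $\cosh\sqrt{\zeta}$ denotes the entire function $\sum_{m\ge0}\zeta^m/(2m)!$ of $\zeta\in\mathbb C$ (independent of the choice of square root). *)

(* Defs.v *)
From Stdlib Require Import Reals.
From Coquelicot Require Import Coquelicot.
Open Scope R_scope.

(* Terms of the entire series  cosh sqrt(z) = sum_{m>=0} z^m / (2m)!  *)
Definition cosh_sqrt_term (z : C) (m : nat) : C :=
  Cdiv (pow_n z m) (RtoC (INR (Factorial.fact (2 * m)))).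

Definition is_cosh_sqrt (z w : C) : Prop :=
  is_series (cosh_sqrt_term z) w.

(* Complex hyperbolic cosine: cosh(a + i b) = cosh a cos b + i sinh a sin b. *)
Definition Ccosh (w : C) : C :=
  (cosh (Re w) * cos (Im w), sinh (Re w) * sin (Im w)).

(* Main.v *)
Require Import Defs.
From Stdlib Require Import Reals.
From Stdlib Require Import Lra Lia Psatz Factorial.
From Coquelicot Require Import Coquelicot.
Open Scope R_scope.

Definition re_c (s : C) (n : nat) : R := fst (pow_n s n) / INR (fact n).
Definition im_c (s : C) (n : nat) : R := snd (pow_n s n) / INR (fact n).

Lemma pow_n_C_S (s : C) n : pow_n s (S n) = Cmult s (pow_n s n).
Proof. reflexivity. Qed.

Lemma Cmod_pow_n (s : C) n : Cmod (pow_n s n) = Cmod s ^ n.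
Proof.
  induction n as [|n IH].
  - simpl. apply Cmod_1.
  - rewrite pow_n_C_S, Cmod_mult, IH. simpl. ring.
Qed.

Lemma fact_pos n : 0 < INR (fact n).
Proof. apply lt_0_INR, lt_O_fact. Qed.

Lemma exp_term_le K n : 0 <= K -> K ^ n / INR (fact n) <= exp K.
Proof.
  intros HK.
  assert (H := is_exp_Reals K).
  set (An := fun k => / INR (fact k) * K ^ k).
  assert (Hc : Un_cv (fun N => sum_f_R0 An N) (exp K)).
  { apply is_lim_seq_Reals.
    eapply is_lim_seq_ext; [|exact H].
    intros N. simpl. rewrite sum_n_Reals. apply sum_eq. intros i _.
    unfold An. rewrite pow_n_pow. simpl. unfold scal; simpl. unfold mult; simpl. ring. }
  assert (Hpos : forall k, 0 <= An k).
  { intros k. unfold An. apply Rmult_le_pos.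
    - left. apply Rinv_0_lt_compat, fact_pos.
    - apply pow_le; lra. }
  apply Rle_trans with (sum_f_R0 An n).
  - destruct n as [|n].
    + simpl. unfold An. simpl. lra.
    + replace (K ^ S n / INR (fact (S n))) with (An (S n)) by (unfold An, Rdiv; ring).
      change (sum_f_R0 An (S n)) with (sum_f_R0 An n + An (S n)).
      assert (0 <= sum_f_R0 An n) by (apply cond_pos_sum; exact Hpos). lra.
  - apply sum_incr; assumption.
Qed.

Lemma rad_inf (c : nat -> R) K : 0 <= K ->
  (forall n, Rabs (c n) <= K ^ n / INR (fact n)) ->
  forall x, Rbar_lt (Rabs x) (CV_radius c).
Proof.
  intros HK Hc x.
  set (r := Rabs x + 1).
  assert (Hr : 0 <= r) by (unfold r; pose proof (Rabs_pos x); lra).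
  assert (Hb : exists M, forall n, Rabs (c n * r ^ n) <= M).
  { exists (exp (K * r)). intros n.
    rewrite Rabs_mult, (Rabs_pos_eq (r ^ n)) by (apply pow_le; lra).
    apply Rle_trans with (K ^ n / INR (fact n) * r ^ n).
    - apply Rmult_le_compat_r; [apply pow_le; lra | apply Hc].
    - replace (K ^ n / INR (fact n) * r ^ n) with ((K * r) ^ n / INR (fact n))
        by (rewrite Rpow_mult_distr; unfold Rdiv; ring).
      apply exp_term_le. apply Rmult_le_pos; lra. }
  destruct (CV_radius_bounded c) as [Hub _].
  specialize (Hub r Hb).
  destruct (CV_radius c) as [l| |]; simpl in *; unfold r in *; lra.
Qed.

Lemma im_le_Cmod' (z : C) : Rabs (snd z) <= Cmod z.
Proof.
  pose proof (Cmod2_alt z) as H. pose proof (Cmod_ge_0 z).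
  unfold Im in H. destruct z as [x y]; simpl in *.
  apply Rabs_le. split; nra.
Qed.

Lemma re_c_bound s n : Rabs (re_c s n) <= Cmod s ^ n / INR (fact n).
Proof.
  unfold re_c. unfold Rdiv. rewrite Rabs_mult, Rabs_inv, (Rabs_pos_eq (INR _)) by (left; apply fact_pos).
  apply Rmult_le_compat_r. left; apply Rinv_0_lt_compat, fact_pos.
  rewrite <- Cmod_pow_n. apply re_le_Cmod.
Qed.

Lemma im_c_bound s n : Rabs (im_c s n) <= Cmod s ^ n / INR (fact n).
Proof.
  unfold im_c. unfold Rdiv. rewrite Rabs_mult, Rabs_inv, (Rabs_pos_eq (INR _)) by (left; apply fact_pos).
  apply Rmult_le_compat_r. left; apply Rinv_0_lt_compat, fact_pos.
  rewrite <- Cmod_pow_n. apply im_le_Cmod'.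
Qed.

Lemma re_c_S s n : PS_derive (re_c s) n = fst s * re_c s n - snd s * im_c s n.
Proof.
  unfold PS_derive, re_c, im_c. rewrite pow_n_C_S.
  destruct (pow_n s n) as [x y]. destruct s as [a b]. unfold Cmult; cbn [fst snd].
  rewrite fact_simpl, mult_INR. pose proof (fact_pos n). pose proof (lt_0_INR (S n) (Nat.lt_0_succ n)).
  field. lra.
Qed.

Lemma im_c_S s n : PS_derive (im_c s) n = snd s * re_c s n + fst s * im_c s n.
Proof.
  unfold PS_derive, re_c, im_c. rewrite pow_n_C_S.
  destruct (pow_n s n) as [x y]. destruct s as [a b]. unfold Cmult; cbn [fst snd].
  rewrite fact_simpl, mult_INR. pose proof (fact_pos n). pose proof (lt_0_INR (S n) (Nat.lt_0_succ n)).
  field. lra.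
Qed.

Lemma rad_re s x : Rbar_lt (Rabs x) (CV_radius (re_c s)).
Proof. apply rad_inf with (Cmod s). apply Cmod_ge_0. apply re_c_bound. Qed.
Lemma rad_im s x : Rbar_lt (Rabs x) (CV_radius (im_c s)).
Proof. apply rad_inf with (Cmod s). apply Cmod_ge_0. apply im_c_bound. Qed.

Lemma PSeries_lin (c1 c2 : R) (f g : nat -> R) x :
  ex_pseries f x -> ex_pseries g x ->
  PSeries (fun n => c1 * f n + c2 * g n) x = c1 * PSeries f x + c2 * PSeries g x.
Proof.
  intros Hf Hg.
  rewrite <- (PSeries_scal c1 f), <- (PSeries_scal c2 g).
  rewrite <- PSeries_plus.
  - apply PSeries_ext. intros n. reflexivity.
  - apply ex_pseries_scal; [apply Rmult_comm | exact Hf].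
  - apply ex_pseries_scal; [apply Rmult_comm | exact Hg].
Qed.

Lemma deriv_re s t : is_derive (PSeries (re_c s)) t
   (fst s * PSeries (re_c s) t - snd s * PSeries (im_c s) t).
Proof.
  replace (fst s * PSeries (re_c s) t - snd s * PSeries (im_c s) t)
    with (PSeries (PS_derive (re_c s)) t).
  - apply is_derive_PSeries, rad_re.
  - rewrite (PSeries_ext _ (fun n => fst s * re_c s n + (- snd s) * im_c s n)).
    + rewrite (PSeries_lin (fst s) (- snd s) (re_c s) (im_c s) t
        (CV_radius_inside _ _ (rad_re s t)) (CV_radius_inside _ _ (rad_im s t))). ring.
    + intros n. rewrite re_c_S. ring.
Qed.

Lemma deriv_im s t : is_derive (PSeries (im_c s)) t
   (snd s * PSeries (re_c s) t + fst s * PSeries (im_c s) t).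
Proof.
  replace (snd s * PSeries (re_c s) t + fst s * PSeries (im_c s) t)
    with (PSeries (PS_derive (im_c s)) t).
  - apply is_derive_PSeries, rad_im.
  - rewrite (PSeries_ext _ (fun n => snd s * re_c s n + fst s * im_c s n)).
    + rewrite (PSeries_lin (snd s) (fst s) (re_c s) (im_c s) t
        (CV_radius_inside _ _ (rad_re s t)) (CV_radius_inside _ _ (rad_im s t))). ring.
    + intros n. rewrite im_c_S. ring.
Qed.

Lemma N_deriv s t :
  is_derive (fun t => ((PSeries (re_c s) t - exp (fst s * t) * cos (snd s * t)) ^ 2
      + (PSeries (im_c s) t - exp (fst s * t) * sin (snd s * t)) ^ 2) * exp (- (2 * fst s * t))) t 0.
Proof.
  pose proof (deriv_re s t) as HR. pose proof (deriv_im s t) as HI.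
  auto_derive.
  - split; [eexists; exact HR|split; [eexists; exact HI|exact I]].
  - replace (Derive (fun x : R => PSeries (re_c s) x) t) with
      (fst s * PSeries (re_c s) t - snd s * PSeries (im_c s) t)
      by (symmetry; apply is_derive_unique; exact HR).
    replace (Derive (fun x : R => PSeries (im_c s) x) t) with
      (snd s * PSeries (re_c s) t + fst s * PSeries (im_c s) t)
      by (symmetry; apply is_derive_unique; exact HI).
    ring.
Qed.

Lemma core_vals s :
  PSeries (re_c s) 1 = exp (fst s) * cos (snd s) /\
  PSeries (im_c s) 1 = exp (fst s) * sin (snd s).
Proof.
  set (N := fun t => ((PSeries (re_c s) t - exp (fst s * t) * cos (snd s * t)) ^ 2
      + (PSeries (im_c s) t - exp (fst s * t) * sin (snd s * t)) ^ 2) * exp (- (2 * fst s * t))).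
  destruct (MVT_cor4 N (fun _ => 0) 0 1) with (b := 1) as [c [Hc _]].
  - intros c _. apply N_deriv.
  - rewrite Rminus_0_r, Rabs_R1. lra.
  - assert (H0 : N 0 = 0).
    { unfold N. rewrite !PSeries_0. unfold re_c, im_c. simpl.
      rewrite !Rmult_0_r, exp_0, cos_0, sin_0, Ropp_0, exp_0. field. }
    assert (H1 : N 1 = 0) by lra.
    unfold N in H1. rewrite !Rmult_1_r in H1.
    pose proof (exp_pos (- (2 * fst s))) as He.
    assert (Hs : (PSeries (re_c s) 1 - exp (fst s) * cos (snd s)) ^ 2 +
       (PSeries (im_c s) 1 - exp (fst s) * sin (snd s)) ^ 2 = 0).
    { apply Rmult_eq_reg_r with (exp (- (2 * fst s))); [|lra]. rewrite Rmult_0_l. exact H1. }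
    set (X := PSeries (re_c s) 1 - exp (fst s) * cos (snd s)) in Hs.
    set (Y := PSeries (im_c s) 1 - exp (fst s) * sin (snd s)) in Hs.
    pose proof (pow2_ge_0 X). pose proof (pow2_ge_0 Y).
    assert (HX : X ^ 2 = 0) by lra. assert (HY : Y ^ 2 = 0) by lra.
    assert (X = 0) by nra. assert (Y = 0) by nra.
    unfold X, Y in *. split; lra.
Qed.

Lemma core_series s :
  is_series (re_c s) (exp (fst s) * cos (snd s)) /\
  is_series (im_c s) (exp (fst s) * sin (snd s)).
Proof.
  destruct (core_vals s) as [H1 H2].
  split.
  - rewrite <- H1.
    assert (H := PSeries_correct _ _ (CV_radius_inside _ _ (rad_re s 1))).
    eapply is_series_ext; [|exact H]. intros n. simpl.
    rewrite pow_n_pow, pow1. unfold scal; simpl; unfold mult; simpl. ring.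
  - rewrite <- H2.
    assert (H := PSeries_correct _ _ (CV_radius_inside _ _ (rad_im s 1))).
    eapply is_series_ext; [|exact H]. intros n. simpl.
    rewrite pow_n_pow, pow1. unfold scal; simpl; unfold mult; simpl. ring.
Qed.

Lemma even_extract (f : nat -> R) L1 L2 :
  is_series f L1 -> is_series (fun n => (-1) ^ n * f n) L2 ->
  is_series (fun m => f (2 * m)%nat) ((L1 + L2) / 2).
Proof.
  intros H1 H2.
  set (g := fun n => / 2 * (f n + (-1) ^ n * f n)).
  assert (Hg : is_series g ((L1 + L2) / 2)).
  { assert (H := is_series_scal (/ 2) _ _ (is_series_plus _ _ _ _ H1 H2)).
    replace ((L1 + L2) / 2) with (scal (/ 2) (plus L1 L2))
      by (unfold scal, plus; simpl; unfold mult; simpl; field).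
    exact H. }
  assert (Ge : forall k, g (2 * k)%nat = f (2 * k)%nat).
  { intros k. unfold g. rewrite pow_1_even. field. }
  assert (Go : forall k, g (S (2 * k)) = 0).
  { intros k. unfold g. rewrite pow_1_odd. field. }
  assert (Hsum : forall M, sum_n (fun m => f (2 * m)%nat) M = sum_n g (2 * M + 1)).
  { induction M as [|M IH].
    - pose proof (Ge 0%nat) as G0. pose proof (Go 0%nat) as G1.
      change (2 * 0)%nat with 0%nat in G0. change (S (2 * 0)) with 1%nat in G1.
      change (2 * 0 + 1)%nat with 1%nat. rewrite sum_Sn, !sum_O, G0, G1. unfold plus; simpl; ring.
    - replace (2 * S M + 1)%nat with (S (S (2 * M + 1))) by lia.
      rewrite !sum_Sn, IH.
      replace (S (2 * M + 1)) with (2 * S M)%nat by lia.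
      rewrite Ge, Go. unfold plus; simpl; ring. }
  unfold is_series.
  change (is_lim_seq (sum_n (fun m => f (2 * m)%nat)) ((L1 + L2) / 2)).
  apply is_lim_seq_ext with (fun M => sum_n g (2 * M + 1)).
  { intros M. symmetry. apply Hsum. }
  apply (is_lim_seq_subseq (sum_n g) ((L1 + L2) / 2) (fun M => (2 * M + 1)%nat)).
  - apply eventually_subseq. intros n. lia.
  - exact Hg.
Qed.

Lemma pow_n_opp (s : C) n :
  pow_n (Copp s) n = ((-1) ^ n * fst (pow_n s n), (-1) ^ n * snd (pow_n s n)).
Proof.
  induction n as [|n IH].
  - simpl. rewrite !Rmult_1_l. reflexivity.
  - rewrite !pow_n_C_S, IH. destruct (pow_n s n) as [x y]. destruct s as [a b].
    unfold Cmult, Copp; cbn [fst snd pow]. f_equal; ring.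
Qed.

Lemma re_c_opp s n : re_c (Copp s) n = (-1) ^ n * re_c s n.
Proof. unfold re_c. rewrite pow_n_opp. cbn [fst]. unfold Rdiv. ring. Qed.
Lemma im_c_opp s n : im_c (Copp s) n = (-1) ^ n * im_c s n.
Proof. unfold im_c. rewrite pow_n_opp. cbn [snd]. unfold Rdiv. ring. Qed.

Lemma pow_n_sq (s : C) m : pow_n (Cmult s s) m = pow_n s (2 * m).
Proof.
  induction m as [|m IH].
  - reflexivity.
  - replace (2 * S m)%nat with (S (S (2 * m))) by lia.
    rewrite !pow_n_C_S, IH, <- Cmult_assoc. reflexivity.
Qed.

Lemma Cdiv_real (x : C) (r : R) : r <> 0 -> Cdiv x (RtoC r) = (fst x / r, snd x / r).
Proof.
  intros Hr. destruct x as [x y]. unfold Cdiv, Cmult, Cinv, RtoC; cbn [fst snd].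
  f_equal; field; auto.
Qed.

Lemma term_fst s m : fst (cosh_sqrt_term (Cmult s s) m) = re_c s (2 * m).
Proof.
  unfold cosh_sqrt_term, re_c. rewrite pow_n_sq, Cdiv_real.
  - reflexivity.
  - apply Rgt_not_eq, fact_pos.
Qed.
Lemma term_snd s m : snd (cosh_sqrt_term (Cmult s s) m) = im_c s (2 * m).
Proof.
  unfold cosh_sqrt_term, im_c. rewrite pow_n_sq, Cdiv_real.
  - reflexivity.
  - apply Rgt_not_eq, fact_pos.
Qed.

Lemma cosh_series_fst s :
  is_series (fun m => fst (cosh_sqrt_term (Cmult s s) m)) (cosh (fst s) * cos (snd s)).
Proof.
  eapply is_series_ext. { intros m. symmetry. apply term_fst. }
  replace (cosh (fst s) * cos (snd s)) with
    ((exp (fst s) * cos (snd s) + exp (fst (Copp s)) * cos (snd (Copp s))) / 2).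
  - apply even_extract.
    + apply core_series.
    + eapply is_series_ext. { intros n. apply re_c_opp. }
      apply core_series.
  - destruct s as [a b]. unfold Copp, cosh; cbn [fst snd]. rewrite cos_neg. field.
Qed.

Lemma cosh_series_snd s :
  is_series (fun m => snd (cosh_sqrt_term (Cmult s s) m)) (sinh (fst s) * sin (snd s)).
Proof.
  eapply is_series_ext. { intros m. symmetry. apply term_snd. }
  replace (sinh (fst s) * sin (snd s)) with
    ((exp (fst s) * sin (snd s) + exp (fst (Copp s)) * sin (snd (Copp s))) / 2).
  - apply even_extract.
    + apply core_series.
    + eapply is_series_ext. { intros n. apply im_c_opp. }
      apply core_series.
  - destruct s as [a b]. unfold Copp, sinh; cbn [fst snd]. rewrite sin_neg. field.
Qed.

Lemma sum_n_fst (f : nat -> C) n : fst (sum_n f n) = sum_n (fun k => fst (f k)) n.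
Proof.
  induction n as [|n IH].
  - rewrite !sum_O. reflexivity.
  - rewrite !sum_Sn, <- IH. reflexivity.
Qed.
Lemma sum_n_snd (f : nat -> C) n : snd (sum_n f n) = sum_n (fun k => snd (f k)) n.
Proof.
  induction n as [|n IH].
  - rewrite !sum_O. reflexivity.
  - rewrite !sum_Sn, <- IH. reflexivity.
Qed.

Lemma is_series_C_inv (f : nat -> C) l :
  is_series f l ->
  is_series (fun n => fst (f n)) (fst l) /\ is_series (fun n => snd (f n)) (snd l).
Proof.
  intros H. unfold is_series in *. split.
  - apply filterlim_locally. intros eps.
    pose proof (proj1 (filterlim_locally _ _) H eps) as E.
    revert E. apply filter_imp. intros n [B1 B2].
    rewrite <- sum_n_fst. exact B1.
  - apply filterlim_locally. intros eps.
    pose proof (proj1 (filterlim_locally _ _) H eps) as E.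
    revert E. apply filter_imp. intros n [B1 B2].
    rewrite <- sum_n_snd. exact B2.
Qed.

Lemma cosh_sqrt_val (s w : C) : is_cosh_sqrt (Cmult s s) w ->
  w = (cosh (fst s) * cos (snd s), sinh (fst s) * sin (snd s)).
Proof.
  intros H. unfold is_cosh_sqrt in H.
  destruct (is_series_C_inv _ _ H) as [H1 H2].
  apply is_series_unique in H1. apply is_series_unique in H2.
  rewrite (is_series_unique _ _ (cosh_series_fst s)) in H1.
  rewrite (is_series_unique _ _ (cosh_series_snd s)) in H2.
  destruct w as [w1 w2]. cbn [fst snd] in *. rewrite H1, H2. reflexivity.
Qed.

Lemma csqrt_ex (p q : R) : exists a b, a * a - b * b = p /\ a * b + b * a = q.
Proof.
  set (m := sqrt (p * p + q * q)).
  assert (Hm0 : 0 <= m) by apply sqrt_pos.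
  assert (Hm2 : m * m = p * p + q * q) by (apply sqrt_sqrt; nra).
  assert (Hmp : - m <= p <= m) by (split; nra).
  set (a := sqrt ((m + p) / 2)). set (b0 := sqrt ((m - p) / 2)).
  assert (Ha : a * a = (m + p) / 2) by (apply sqrt_sqrt; lra).
  assert (Hb : b0 * b0 = (m - p) / 2) by (apply sqrt_sqrt; lra).
  assert (Ha0 : 0 <= a) by apply sqrt_pos.
  assert (Hb0 : 0 <= b0) by apply sqrt_pos.
  assert (Hab : (a * b0) * (a * b0) = (q * q) / 4).
  { replace ((a * b0) * (a * b0)) with ((a * a) * (b0 * b0)) by ring.
    rewrite Ha, Hb. nra. }
  assert (Habs : a * b0 = Rabs q / 2).
  { assert (0 <= a * b0) by nra.
    assert (Rabs q * Rabs q = q * q) by (rewrite <- Rabs_mult; apply Rabs_pos_eq; nra).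
    pose proof (Rabs_pos q). nra. }
  destruct (Rle_dec 0 q) as [Hq|Hq].
  - exists a, b0. rewrite Rabs_pos_eq in Habs by lra. split; nra.
  - exists a, (- b0). rewrite Rabs_left in Habs by lra. split; nra.
Qed.

Lemma cosh2 x : cosh x * cosh x = 1 + sinh x * sinh x.
Proof.
  unfold cosh, sinh. pose proof (exp_plus x (- x)) as H.
  rewrite Rplus_opp_r, exp_0 in H.
  nra.
Qed.

Lemma sinh_abs2 x : sinh x * sinh x = sinh (Rabs x) * sinh (Rabs x).
Proof.
  destruct (Rle_dec 0 x).
  - rewrite Rabs_pos_eq by lra. reflexivity.
  - rewrite Rabs_left by lra. unfold sinh. rewrite Ropp_involutive. field.
Qed.

Lemma ellipse (a b u ph c : R) : 0 <= c <= 1 ->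
  cosh a * cos b = c * (cosh u * cos ph) ->
  sinh a * sin b = c * (sinh u * sin ph) ->
  a * a <= u * u.
Proof.
  intros Hc E1 E2.
  destruct (Rle_dec (a * a) (u * u)) as [|Hlt]; [assumption|exfalso].
  apply Rnot_le_lt in Hlt.
  assert (Hau : Rabs u < Rabs a).
  { apply Rsqr_lt_abs_0. unfold Rsqr. exact Hlt. }
  assert (Hs : sinh u * sinh u < sinh a * sinh a).
  { rewrite (sinh_abs2 u), (sinh_abs2 a).
    pose proof (sinh_lt _ _ Hau).
    assert (0 <= sinh (Rabs u)).
    { rewrite <- sinh_0. destruct (Req_dec (Rabs u) 0) as [e|n].
      - rewrite e. lra.
      - left. apply sinh_lt. pose proof (Rabs_pos u). lra. }
    nra. }
  pose proof (cosh2 a) as Ca. pose proof (cosh2 u) as Cu.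
  pose proof (sin2_cos2 b) as Tb. pose proof (sin2_cos2 ph) as Tp.
  unfold Rsqr in Tb, Tp.
  set (A := cosh a * cosh a) in *. set (P := cosh u * cosh u) in *.
  set (X := cos b * cos b) in *. set (Y := cos ph * cos ph) in *.
  assert (F1 : A * X <= P * Y).
  { assert (A * X = c * c * (P * Y)).
    { unfold A, X, P, Y. replace (cosh a * cosh a * (cos b * cos b)) with
        ((cosh a * cos b) * (cosh a * cos b)) by ring. rewrite E1. ring. }
    assert (0 <= P * Y) by (apply Rmult_le_pos; unfold P, Y; nra).
    assert (c * c <= 1) by nra. nra. }
  assert (F2 : (A - 1) * (1 - X) <= (P - 1) * (1 - Y)).
  { assert ((A - 1) * (1 - X) = c * c * ((P - 1) * (1 - Y))).
    { replace (A - 1) with (sinh a * sinh a) by lra.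
      replace (P - 1) with (sinh u * sinh u) by lra.
      replace (1 - X) with (sin b * sin b) by lra.
      replace (1 - Y) with (sin ph * sin ph) by lra.
      replace (sinh a * sinh a * (sin b * sin b)) with
        ((sinh a * sin b) * (sinh a * sin b)) by ring. rewrite E2. ring. }
    assert (0 <= (P - 1) * (1 - Y)).
    { replace (P - 1) with (sinh u * sinh u) by lra.
      replace (1 - Y) with (sin ph * sin ph) by lra. nra. }
    assert (c * c <= 1) by nra. nra. }
  assert (HS0 : 0 <= sinh u * sinh u) by nra.
  assert (HAP : P < A) by lra.
  assert (HP1 : 1 <= P) by lra.
  assert (HX : 0 <= X <= 1).
  { assert (0 <= sin b * sin b) by nra. unfold X in *. split; nra. }
  assert (HY : 0 <= Y <= 1).
  { assert (0 <= sin ph * sin ph) by nra. unfold Y in *. split; nra. }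
  assert (K1 : 0 <= (A - P) * Y) by (apply Rmult_le_pos; lra).
  assert (K2 : 0 <= (A - P) * (1 - Y)) by (apply Rmult_le_pos; lra).
  assert (G1 : X <= Y).
  { assert (0 <= A * (Y - X)) by nra.
    apply Rmult_le_reg_l with A; [lra|]. nra. }
  assert (G2 : Y <= X).
  { assert (0 <= (A - 1) * (X - Y)) by nra.
    apply Rmult_le_reg_l with (A - 1); [lra|]. nra. }
  assert (X = Y) by lra. subst X.
  assert (Y <= 0).
  { assert ((A - P) * Y <= 0) by nra.
    apply Rmult_le_reg_l with (A - P); [lra|]. nra. }
  assert (1 <= Y).
  { assert ((A - P) * (1 - Y) <= 0) by nra.
    apply Rmult_le_reg_l with (A - P); [lra|]. nra. }
  lra.
Qed.

Theorem lemma4p44 (u theta1 phi1 : R) (lam : C) :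
  0 <= theta1 <= PI / 2 ->
  is_cosh_sqrt (Cplus lam (RtoC (u ^ 2)))
    (Cmult (RtoC (cos theta1)) (Ccosh (u, phi1))) ->
  Re lam <= 0.
Proof.
  intros Hth H.
  destruct (csqrt_ex (fst (Cplus lam (RtoC (u ^ 2)))) (snd (Cplus lam (RtoC (u ^ 2)))))
    as [a [b [Hp Hq]]].
  assert (Hz : Cplus lam (RtoC (u ^ 2)) = Cmult (a, b) (a, b)).
  { destruct (Cplus lam (RtoC (u ^ 2))) as [p q]. unfold Cmult; cbn [fst snd] in *.
    rewrite Hp, Hq. reflexivity. }
  rewrite Hz in H. apply cosh_sqrt_val in H.
  assert (Hc : 0 <= cos theta1 <= 1).
  { split.
    - apply cos_ge_0; pose proof PI_RGT_0; lra.
    - apply COS_bound. }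
  unfold Ccosh, Cmult, RtoC in H; cbn [fst snd Re Im] in H.
  injection H as H1 H2.
  assert (Hau : a * a <= u * u).
  { apply (ellipse a b u phi1 (cos theta1) Hc); lra. }
  destruct lam as [l1 l2]. unfold Cplus, RtoC in Hp; cbn [fst snd] in Hp.
  unfold Re; cbn [fst]. simpl in Hp. nra.
Qed.
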